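(* Let $K$ be a number field, let $\alpha>1$ be real, and let $F\in K[[x^{\mathbb{R}}]]$ be a Hahn series satisfying $\sum_{i=0}^d P_i(x)F(x^{\alpha^i})=0$ for some polynomials $P_0,\dots,P_d\in K[x]$ with $P_d\ne0$. Then only finitely many of the sets $T(s)=\alpha^{\mathbb{Z}}s+\mathbb{Z}[\alpha,\alpha^{-1}]$ ($s\in\mathbb{R}$) have nonempty intersection with $P(F)$; in other words, the set $\widehat{P(F)}$ of equivalence classes of the relation $\sim$ meeting $P(F)$ is finite.
   Context: $K[[x^{\mathbb{R}}]]$ is the field of Hahn series $\sum_{i\in\mathbb{R}} f_ix^i$ ($f_i\in K$) with well-ordered support $P(F)=\{i:f_i\ne0\}$; $F(x^\gamma)=\sum_if_ix^{\gamma i}$. $\mathbb{Z}[\alpha,\alpha^{-1}]$ is the subring of $\mathbb{R}$ generated by $\alpha^{\pm1}$. The relation $x\sim y$ on $\mathbb{R}$ holds iff $\alpha^mx+r=y$ for some $m\in\mathbb{Z}$, $r\in\mathbb{Z}[\alpha,\alpha^{-1}]$; its equivalence classes are exactly the sets $T(s)=\{\alpha^ms+r:m\in\mathbb{Z}, r\in\mathbb{Z}[\alpha,\alpha^{-1}]\}$. *)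

(* Defs.v *)
From HB Require Import structures.
From mathcomp Require Import all_boot all_order all_algebra all_field.
From mathcomp Require Import all_classical all_reals.
Set Implicit Arguments. Unset Strict Implicit. Unset Printing Implicit Defensive.
Import Order.TTheory GRing.Theory Num.Theory.
Local Open Scope ring_scope.
Local Open Scope classical_set_scope.

(* Support P(F) of a (candidate) Hahn series F : R -> K, F j = coefficient of x^j. *)
Definition supp (R : realType) (K : fieldType) (F : R -> K) : set R :=
  [set j | F j != 0].

Definition is_hahn (R : realType) (K : fieldType) (F : R -> K) : Prop :=
  forall S : set R, S `<=` supp F -> S !=set0 ->
    exists2 m, S m & forall y, S y -> m <= y.

Inductive Zgen (R : realType) (a : R) : R -> Prop :=
| Zgen1 : Zgen a 1
| Zgena : Zgen a a
| ZgenV : Zgen a a^-1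
| ZgenB x y : Zgen a x -> Zgen a y -> Zgen a (x - y)
| ZgenM x y : Zgen a x -> Zgen a y -> Zgen a (x * y).

Definition Tclass (R : realType) (a s : R) : set R :=
  [set y | exists m : int, exists2 r, Zgen a r & y = a ^ m * s + r].

(* Coefficient of x^e in  sum_{i=0}^d P_i(x) F(x^{a^i}), where
   F(x^g) = sum_j F_j x^{g j}: the coefficient of x^e in P(x) F(x^g) is
   sum_k P`_k F_{(e-k)/g}. *)
Definition func_eq_coef (R : realType) (K : fieldType) (a : R) (d : nat)
  (P : nat -> {poly K}) (F : R -> K) (e : R) : K :=
  \sum_(i < d.+1) \sum_(k < size (P i)) (P i)`_k * F ((e - k%:R) / a ^+ i).

(* Main.v *)
Require Import Defs.
From HB Require Import structures.
From mathcomp Require Import all_boot all_order all_algebra all_field.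
From mathcomp Require Import all_classical all_reals.
From mathcomp Require Import ring.
Import Order.TTheory GRing.Theory Num.Theory.
Local Open Scope ring_scope.
Local Open Scope classical_set_scope.

Section Z.
Variables (R : realType) (a : R).
Lemma Zgen0 : Zgen a 0.
Proof. by rewrite -(subrr 1); apply: ZgenB; apply: Zgen1. Qed.
Lemma ZgenN x : Zgen a x -> Zgen a (- x).
Proof. by move=> h; rewrite -sub0r; apply: ZgenB => //; apply: Zgen0. Qed.
Lemma ZgenD x y : Zgen a x -> Zgen a y -> Zgen a (x + y).
Proof. by move=> hx hy; rewrite -(opprK y); apply: ZgenB => //; apply: ZgenN. Qed.
Lemma Zgen_nat n : Zgen a n%:R.
Proof. elim: n => [|n IH]; first exact: Zgen0.
by rewrite mulrSr; apply: ZgenD => //; apply: Zgen1. Qed.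
Lemma Zgen_X x n : Zgen a x -> Zgen a (x ^+ n).
Proof. move=> hx; elim: n => [|n IH]; first by rewrite expr0; apply: Zgen1.
by rewrite exprS; apply: ZgenM. Qed.
Lemma Zgen_expz (z : int) : Zgen a (a ^ z).
Proof.
case: z => n.
  by apply: Zgen_X; apply: Zgena.
by rewrite NegzE -exprz_inv; apply: Zgen_X; apply: ZgenV.
Qed.

Lemma Tclass_trans s v : a != 0 -> Tclass a s v -> Tclass a v = Tclass a s.
Proof.
move=> a0 [m [r hr ->]].
have au : a \is a GRing.unit by rewrite unitfE.
apply/seteqP; split => y [m' [r' hr' ->]].
  exists (m' + m); exists (a ^ m' * r + r').
    by apply: ZgenD => //; apply: ZgenM => //; apply: Zgen_expz.
  by rewrite exprzDr // mulrDr mulrA addrA.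
exists (m' - m); exists (r' - a ^ (m' - m) * r).
  by apply: ZgenB => //; apply: ZgenM => //; apply: Zgen_expz.
rewrite mulrDr mulrA -exprzDr // subrK; ring.
Qed.
End Z.

Lemma seq_min (R : realType) (T : eqType) (f : T -> R) (s : seq T) :
  s != [::] -> exists2 x, x \in s & forall y, y \in s -> f x <= f y.
Proof.
elim: s => [//|x s IH] _.
case: (eqVneq s [::]) => [->|sne].
  by exists x; rewrite ?mem_head // => y; rewrite inE => /eqP ->.
have [z zs zmin] := IH sne.
case: (lerP (f x) (f z)) => hxz.
  exists x; first exact: mem_head.
  move=> y; rewrite inE => /orP [/eqP ->//|ys].
  exact: le_trans hxz (zmin y ys).
exists z; first by rewrite inE zs orbT.
move=> y; rewrite inE => /orP [/eqP ->|ys]; first exact: ltW.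
exact: zmin.
Qed.

Theorem mainTheorem8 (R : realType) (K : fieldExtType rat) (a : R)
  (d : nat) (P : nat -> {poly K}) (F : R -> K) :
  1 < a -> is_hahn F -> P d != 0 ->
  (forall e : R, func_eq_coef a d P F e = 0) ->
  finite_set [set Tclass a s | s in [set s | Tclass a s `&` supp F !=set0]].
Proof.
move=> a1 hahn Pd0 Heq.
have apos : 0 < a by apply: lt_trans a1.
have a0 : a != 0 by rewrite gt_eqF.
have an0 : forall i, a ^+ i != 0 by move=> i; rewrite expf_neq0.
have apos' : forall i, 0 < a ^+ i by move=> i; rewrite exprn_gt0.
pose N := (\max_(i < d.+1) size (P i))%N.
pose g := fun p : ('I_d.+1 * 'I_d.+1) * ('I_N * 'I_N) =>
  ((p.2.1)%:R - (p.2.2)%:R : R) / (a ^+ p.1.1 - a ^+ p.1.2).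
pose V := [set g x | x in [set: ('I_d.+1 * 'I_d.+1) * ('I_N * 'I_N)]].
apply: (sub_finite_set _ (finite_image (Tclass a) (finite_image g (@finite_finset _ setT)))).
move=> X [s [y [hyT hyF]] <-].
have [v [vT vF] vmin] := hahn (Tclass a s `&` supp F)
  (fun z (h : (Tclass a s `&` supp F) z) => h.2) (ex_intro _ y (conj hyT hyF)).
have Tv : Tclass a v = Tclass a s by apply: Tclass_trans.
suff : V v by move=> Vv; exists v.
apply: contrapT => nV.
pose pairs := [seq (i, k) | i <- iota 0 d.+1,
                 k <- [seq k <- iota 0 (size (P i)) | (P i)`_k != 0]].
have mem_pairs : forall i k, (i < d.+1)%N -> (P i)`_k != 0 -> (i, k) \in pairs.
  move=> i k hi hk; apply/allpairsPdep; exists i, k; split => //.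
    by rewrite mem_iota.
  rewrite mem_filter hk mem_iota /=.
  rewrite add0n; case: (ltnP k (size (P i))) hk => // hs.
  by rewrite nth_default // eqxx.
have pne : pairs != [::].
  apply/eqP => pe.
  have := mem_pairs d (size (P d)).-1 (leqnn _).
  by rewrite -lead_coefE lead_coef_eq0 Pd0 pe => /(_ isT).
have [[i0 k0] p0 pmin] := @seq_min R _ (fun p : nat * nat => (p.2)%:R + a ^+ p.1 * v) pairs pne.
move/allpairsPdep: p0 => [i0' [k0' [hi0 hk0 [ei ek]]]]; subst i0' k0'.
rewrite mem_iota /= in hi0.
rewrite mem_filter mem_iota /= in hk0.
move/andP: hk0 => [c0 k0lt]; rewrite ?add0n in hi0 k0lt.
pose mu := k0%:R + a ^+ i0 * v.
have argT : forall i k : nat, Tclass a s ((mu - k%:R) / a ^+ i).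
  move=> i k; rewrite -Tv.
  exists (i0%:Z - i%:Z); exists ((k0%:R - k%:R) / a ^+ i).
    apply: ZgenM; first by apply: ZgenB; apply: Zgen_nat.
    have -> : (a ^+ i)^-1 = a ^ (- (i%:Z)) by rewrite -invr_expz.
    exact: Zgen_expz.
  have au : a \is a GRing.unit by rewrite unitfE.
  rewrite (exprzDr au) -invr_expz /mu.
  change (a ^ (Posz i0)) with (a ^+ i0); change (a ^ (Posz i)) with (a ^+ i).
  by field.
have term : forall (i k : nat), (i < d.+1)%N ->
    (i != i0) || (k != k0) ->
    (P i)`_k * F ((mu - k%:R) / a ^+ i) = 0.
  move=> i k hi hne.
  case: (eqVneq (P i)`_k 0) => [->|cne]; first by rewrite mul0r.
  have := pmin (i : nat, k : nat) (mem_pairs _ _ hi cne) => /= hle.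
  have tle : (mu - k%:R) / a ^+ i <= v.
    by rewrite ler_pdivrMr // lerBlDl mulrC.
  case: (eqVneq ((mu - k%:R) / a ^+ i) v) => [teq|tne].
    exfalso; apply: nV.
    have eq1 : mu = k%:R + a ^+ i * v.
      by rewrite -teq mulrC mulfVK // subrKC.
    case: (eqVneq (i : nat) i0) => [ei|nei].
      move: hne; rewrite ei eqxx /= => kne.
      move: eq1; rewrite /mu ei => /addIr /eqP; rewrite eqr_nat eq_sym (negbTE kne) //.
    have hk0N : (k0 < N)%N.
      apply: leq_trans k0lt _.
      rewrite /N; exact: (leq_bigmax (F := fun j : 'I_d.+1 => size (P j)) (Ordinal hi0)).
    have hkN : (k < N)%N.
      have klt : (k < size (P i))%N.
        by case: ltnP cne => // hs; rewrite nth_default ?eqxx.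
      apply: leq_trans klt _.
      rewrite /N; exact: (leq_bigmax (F := fun j : 'I_d.+1 => size (P j)) (Ordinal hi)).
    exists ((Ordinal hi, Ordinal hi0), (Ordinal hk0N, Ordinal hkN)) => //=.
    have dne : a ^+ i - a ^+ i0 != 0.
      rewrite subr_eq0; apply/negP => /eqP /(ieexprIn apos (negbT (gt_eqF a1))) /eqP.
      by rewrite (negbTE nei).
    rewrite /g /=.
    move: eq1; rewrite /mu => eq1.
    have -> : (k0%:R - k%:R : R) = v * (a ^+ i - a ^+ i0).
      rewrite -[k0%:R](addrK (a ^+ i0 * v)) eq1; ring.
    by rewrite mulfK.
  have tlt : (mu - k%:R) / a ^+ i < v by rewrite lt_neqAle tne tle.
  case: (eqVneq (F ((mu - k%:R) / a ^+ i)) 0) => [->|Fne]; first by rewrite mulr0.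
  have := vmin _ (conj (argT i k) Fne).
  by rewrite leNgt tlt.
have := Heq mu; rewrite /func_eq_coef.
rewrite (bigD1 (Ordinal hi0)) //= [X in _ + X]big1 ?addr0; last first.
  move=> i ine; apply: big1 => k _; apply: term => //.
  by rewrite -(inj_eq val_inj) in ine; rewrite ine.
rewrite (bigD1 (Ordinal k0lt : 'I_(size (P i0)))) //= [X in _ + X]big1 ?addr0; last first.
  move=> k kne; apply: term => //.
  by rewrite -(inj_eq val_inj) in kne; rewrite kne orbT.
have -> : (mu - k0%:R) / a ^+ i0 = v by rewrite /mu addrC addKr mulrC mulKf.
by move/eqP; rewrite mulf_eq0 (negbTE c0) (negbTE vF).
Qed.
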